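(* Let $K:[0,\infty)\to(0,\infty)$ be non-increasing with $K(0)=1$, and for $\sigma>0$ let $K_\sigma(x)=K(x/\sigma)$. Let $\mathcal{X}=\{\mathbf{x}_1,\dots,\mathbf{x}_n\}\subset\mathbb{R}^d$ and let $\mathcal{C}_1,\dots,\mathcal{C}_k$ be a partition of $\mathcal{X}$ into nonempty sets. For each $l\in[k]$, suppose $\mathcal{C}_l$ is connected at distance $\delta_l$. Let $\mathbf{U}\in\mathbb{R}^{n\times n}$ have as columns the eigenvectors of the normalised Laplacian $\mathbf{L}_{\mathrm{N}}$ of the graph $\mathcal{G}=(\mathcal{X},K_\sigma)$, and let $\mathbf{D}$ be the corresponding degree matrix. Then for each $i,j\in[n]$, $l\in[k]$ with $\mathbf{x}_i,\mathbf{x}_j\in\mathcal{C}_l$, $$\|\mathbf{D}_{ii}^{-1/2}\mathbf{U}_{i,1:k}-\mathbf{D}_{jj}^{-1/2}\mathbf{U}_{j,1:k}\|\le \max_{m\in[k]} n^{1.5}k^{0.5}\sqrt{\frac{K_\sigma(d(\mathcal{C}_m,\mathcal{X}\setminus\mathcal{C}_m))}{K_\sigma(\delta_l)}}.$$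
   Context: $[n]=\{1,\dots,n\}$; $\|\cdot\|$ is the Euclidean norm. For sets $S,U\subset\mathbb{R}^d$, $d(S,U)=\inf_{\mathbf{x}\in S,\mathbf{y}\in U}\|\mathbf{x}-\mathbf{y}\|$, with $d(S,\emptyset)=\infty$. A set $S$ is connected at distance $\delta$ if there is no partition of $S$ into $S_1,S_2$ with $d(S_1,S_2)>\delta$. The graph $(\mathcal{X},K_\sigma)$ has affinity matrix $\mathbf{A}_{ij}=K_\sigma(\|\mathbf{x}_i-\mathbf{x}_j\|)$ (including $i=j$), degree matrix $\mathbf{D}=\mathrm{diag}(\sum_j\mathbf{A}_{ij})$, and normalised Laplacian $\mathbf{L}_{\mathrm{N}}=\mathbf{I}-\mathbf{D}^{-1/2}\mathbf{A}\mathbf{D}^{-1/2}$. ''The eigenvectors'' means an orthonormal eigenbasis arranged as columns with eigenvalues in nondecreasing order. $\mathbf{U}_{i,1:k}$ denotes the first $k$ entries of row $i$. *)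

(* Defs.v *)
From HB Require Import structures.
From mathcomp Require Import all_boot all_order all_algebra.
From mathcomp Require Import all_classical all_reals.
From mathcomp Require Import ereal.

Set Implicit Arguments. Unset Strict Implicit. Unset Printing Implicit Defensive.
Import Order.TTheory GRing.Theory Num.Theory.
Local Open Scope ring_scope.
Local Open Scope classical_set_scope.

Section Defs.
Variable R : realType.

Definition eucl (d : nat) (v : 'rV[R]_d) : R :=
  Num.sqrt (\sum_(c < d) v 0 c ^+ 2).

(* d(S,U) = inf over pairs of indices, as an extended real;
   the infimum of the empty set is +oo, so d(S, emptyset) = +oo. *)
Definition setdist (n d : nat) (x : 'I_n -> 'rV[R]_d) (S U : {set 'I_n}) : \bar R :=
  ereal_inf [set e | exists i j, i \in S /\ j \in U /\ e = (eucl (x i - x j))%:E].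

Definition connected_at (n d : nat) (x : 'I_n -> 'rV[R]_d) (S : {set 'I_n}) (delta : R) : Prop :=
  forall S1 S2 : {set 'I_n}, S1 :|: S2 = S -> S1 :&: S2 = finset.set0 ->
    S1 != finset.set0 -> S2 != finset.set0 -> ~ (setdist x S1 S2 > delta%:E)%E.

Definition Ksig (K : R -> R) (sigma : R) (t : R) : R := K (t / sigma).

(* K_sigma extended to [0, +oo]: at +oo we take the limit of K at infinity,
   i.e. inf_{t >= 0} K t (K is non-increasing and positive). *)
Definition Ksig_ext (K : R -> R) (sigma : R) (t : \bar R) : R :=
  match t with
  | r%:E => Ksig K sigma r
  | _ => inf (K @` [set t : R | 0 <= t])
  end.

Definition affinity (n d : nat) (K : R -> R) (sigma : R) (x : 'I_n -> 'rV[R]_d) : 'M[R]_n :=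
  \matrix_(i, j) Ksig K sigma (eucl (x i - x j)).

Definition degmx (n : nat) (A : 'M[R]_n) : 'M[R]_n :=
  \matrix_(i, j) (if i == j then \sum_(l < n) A i l else 0).

Definition normLap (n : nat) (A : 'M[R]_n) : 'M[R]_n :=
  let Dm12 := \matrix_(i, j) (if i == j then (Num.sqrt (degmx A i i))^-1 else 0) in
  1%:M - Dm12 *m A *m Dm12.

Definition eigbasis (n : nat) (L U : 'M[R]_n) (lam : 'rV[R]_n) : Prop :=
  U^T *m U = 1%:M /\ L *m U = U *m diag_mx lam /\
  (forall a b : 'I_n, (a <= b)%N -> lam 0 a <= lam 0 b).

End Defs.

(* Main.v *)
Require Import Defs.
From HB Require Import structures.
From mathcomp Require Import all_boot all_order all_algebra.
From mathcomp Require Import all_classical all_reals.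
From mathcomp Require Import ereal.
From mathcomp Require Import ring lra zify.

Import Order.TTheory GRing.Theory Num.Theory.
Local Open Scope ring_scope.

Section Aux.
Variable R : realType.
Variable K : R -> R.
Hypothesis K_noninc : forall s t : R, 0 <= s -> s <= t -> K t <= K s.
Hypothesis K_pos : forall t : R, 0 <= t -> 0 < K t.
Hypothesis K0 : K 0 = 1.
Variable sigma : R.
Hypothesis sigma_pos : 0 < sigma.
Variables n d : nat.
Variable x : 'I_n -> 'rV[R]_d.

Lemma eucl_ge0 m (v : 'rV[R]_m) : 0 <= eucl v.
Proof. exact: sqrtr_ge0. Qed.

Lemma euclC (i j : 'I_n) : eucl (x i - x j) = eucl (x j - x i).
Proof.
rewrite /eucl; congr Num.sqrt; apply: eq_bigr => c _; rewrite !mxE; ring.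
Qed.

Lemma eucl0 (i : 'I_n) : eucl (x i - x i) = 0.
Proof.
rewrite /eucl big1 ?sqrtr0 // => c _; rewrite !mxE subrr; ring.
Qed.

Lemma Ksig_pos t : 0 <= t -> 0 < Ksig K sigma t.
Proof. move=> t0; apply: K_pos; exact: divr_ge0 (ltW sigma_pos). Qed.

Lemma Ksig_noninc s t : 0 <= s -> s <= t -> Ksig K sigma t <= Ksig K sigma s.
Proof.
move=> s0 st; apply: K_noninc; first exact: divr_ge0 (ltW sigma_pos).
by rewrite ler_pM2r ?invr_gt0.
Qed.

Let A := affinity K sigma x.
Let deg (i : 'I_n) := \sum_(l < n) A i l.

Lemma AE i j : A i j = Ksig K sigma (eucl (x i - x j)).
Proof. by rewrite /A /affinity mxE. Qed.

Lemma A_pos i j : 0 < A i j.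
Proof. by rewrite AE; apply: Ksig_pos; apply: eucl_ge0. Qed.

Lemma A_sym i j : A i j = A j i.
Proof. by rewrite !AE euclC. Qed.

Lemma A_diag i : A i i = 1.
Proof. by rewrite AE eucl0 /Ksig mul0r K0. Qed.

Lemma deg_ge1 i : 1 <= deg i.
Proof.
rewrite /deg (bigD1 i) //= A_diag lerDl; apply: sumr_ge0 => j _.
exact: ltW (A_pos _ _).
Qed.

Lemma deg_pos i : 0 < deg i.
Proof. exact: lt_le_trans ltr01 (deg_ge1 i). Qed.

Let s (i : 'I_n) : R := Num.sqrt (deg i).

Lemma s_pos i : 0 < s i.
Proof. by rewrite /s sqrtr_gt0 deg_pos. Qed.

Lemma s_sq i : s i ^+ 2 = deg i.
Proof. by rewrite /s sqr_sqrtr // ltW // deg_pos. Qed.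

Let L := normLap A.

Lemma LE i j : L i j = (i == j)%:R - A i j / (s i * s j).
Proof.
rewrite /L /normLap.
set Dm := \matrix_(_, _) _.
have -> : Dm = diag_mx (\row_i (s i)^-1).
  apply/matrixP => p q; rewrite !mxE /s eqxx.
  by case: eqP => [->|]; rewrite ?mulr1n ?mulr0n.
rewrite mul_mx_diag mul_diag_mx !mxE eq_sym invfM.
case: eqP => _; rewrite ?mulr1n ?mulr0n; ring.
Qed.

Definition Qs (u : 'I_n -> R) := \sum_i \sum_j u i * L i j * u j.

Lemma Qs_id (f : 'I_n -> R) :
  Qs (fun i => s i * f i) = 2^-1 * \sum_i \sum_j A i j * (f i - f j) ^+ 2.
Proof.
set S1 := \sum_i \sum_j A i j * f i ^+ 2.
set S3 := \sum_i \sum_j A i j * (f i * f j).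
have T i j : s i * f i * L i j * (s j * f j) =
    (i == j)%:R * (s i ^+ 2 * f i ^+ 2) - A i j * (f i * f j).
  have si := s_pos i; have sj := s_pos j.
  rewrite LE; case: eqP => [<-|_]; rewrite /= ?mul1r ?mul0r ?sub0r; field; rewrite ?gt_eqF // ?mulf_neq0 // gt_eqF.
have -> : Qs (fun i => s i * f i) = S1 - S3.
  rewrite /Qs /S1 /S3 -sumrB; apply: eq_bigr => i _.
  under eq_bigr do rewrite T.
  rewrite sumrB (bigD1 i) //= eqxx mul1r big1 ?addr0; last first.
    by move=> j /negbTE; rewrite eq_sym => ->; rewrite mul0r.
  by rewrite s_sq /deg mulr_suml.
have e2 : \sum_i \sum_j A i j * f j ^+ 2 = S1.
  rewrite exchange_big /=; apply: eq_bigr => i _; apply: eq_bigr => j _.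
  by rewrite A_sym.
have -> : \sum_i \sum_j A i j * (f i - f j) ^+ 2 = S1 + S1 - 2 * S3.
  rewrite -{2}e2 /S1 /S3 mulr_sumr -big_split -sumrB /=; apply: eq_bigr => i _.
  rewrite mulr_sumr -big_split -sumrB /=; apply: eq_bigr => j _; ring.
by field.
Qed.


Variables (U : 'M[R]_n) (lam : 'rV[R]_n).
Hypothesis hU : eigbasis L U lam.

Lemma UUt : U *m U^T = 1%:M.
Proof. by apply: mulmx1C; case: hU. Qed.

Lemma Qs_mx (vr : 'rV[R]_n) : Qs (fun i => vr 0 i) = (vr *m L *m vr^T) 0 0.
Proof.
rewrite /Qs mxE exchange_big /=; apply: eq_bigr => j _.
rewrite !mxE mulr_suml; apply: eq_bigr => i _; by rewrite !mxE.
Qed.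

Lemma Qr_eq (vr : 'rV[R]_n) :
  Qs (fun i => vr 0 i) = \sum_b lam 0 b * ((vr *m U) 0 b) ^+ 2.
Proof.
rewrite Qs_mx.
set w := vr *m U.
have vw : vr = w *m U^T by rewrite /w -mulmxA UUt mulmx1.
case: hU => hUU [hLU _].
have -> : vr *m L *m vr^T = w *m diag_mx lam *m w^T.
  rewrite vw trmx_mul trmxK -!mulmxA (mulmxA L) hLU (mulmxA U^T) (mulmxA U^T).
  by rewrite hUU mul1mx !mulmxA.
rewrite mxE; apply: eq_bigr => b _.
rewrite mul_mx_diag !mxE; ring.
Qed.

Lemma norm_eq (vr : 'rV[R]_n) :
  \sum_i (vr 0 i) ^+ 2 = \sum_b ((vr *m U) 0 b) ^+ 2.
Proof.
set w := vr *m U.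
have vw : vr = w *m U^T by rewrite /w -mulmxA UUt mulmx1.
case: hU => hUU _.
have -> : \sum_i (vr 0 i) ^+ 2 = (vr *m vr^T) 0 0.
  by rewrite mxE; apply: eq_bigr => i _; rewrite !mxE expr2.
rewrite vw trmx_mul trmxK -mulmxA (mulmxA U^T) hUU mul1mx mxE.
by apply: eq_bigr => b _; rewrite !mxE expr2.
Qed.

Lemma col_lam (a : 'I_n) : Qs (fun i => U i a) = lam 0 a.
Proof.
have -> : (fun i => U i a) = (fun i => (row a U^T) 0 i).
  by apply: funext => i; rewrite !mxE.
rewrite Qr_eq -row_mul; case: hU => -> _.
rewrite (bigD1 a) //= big1 ?addr0; first by rewrite !mxE eqxx /= expr1n mulr1.
by move=> b /negbTE; rewrite !mxE eq_sym => ->; rewrite /= expr0n /= mulr0.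
Qed.


Variables (k : nat) (c : 'I_n -> 'I_k) (eps : R).
Hypothesis c_surj : forall l : 'I_k, exists i, c i = l.
Hypothesis eps_ge0 : 0 <= eps.
Hypothesis A_eps : forall i j, c i != c j -> A i j <= eps.

Lemma rayleigh (al : 'I_k -> R) :
  Qs (fun i => s i * al (c i)) <= 2 * n%:R * eps * \sum_i (s i * al (c i)) ^+ 2.
Proof.
rewrite Qs_id.
set T := \sum_i al (c i) ^+ 2.
have h1 : \sum_i \sum_j A i j * (al (c i) - al (c j)) ^+ 2 <=
          \sum_i \sum_j 2 * eps * (al (c i) ^+ 2 + al (c j) ^+ 2).
  apply: ler_sum => i _; apply: ler_sum => j _.
  have hsq : 0 <= 2 * eps * (al (c i) ^+ 2 + al (c j) ^+ 2).
    by apply: mulr_ge0; [apply: mulr_ge0 | apply: addr_ge0; apply: sqr_ge0].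
  case: (eqVneq (c i) (c j)) => [e|ne].
    by rewrite e in hsq *; rewrite subrr expr2 !mulr0.
  have := A_eps i j ne; have := A_pos i j => Ap Ae.
  have h2 : (al (c i) - al (c j)) ^+ 2 <= 2 * (al (c i) ^+ 2 + al (c j) ^+ 2).
    have := sqr_ge0 (al (c i) + al (c j)); nra.
  apply: (le_trans (y := eps * (al (c i) - al (c j)) ^+ 2)).
    by apply: ler_wpM2r => //; apply: sqr_ge0.
  nra.
have h3 : \sum_i \sum_j 2 * eps * (al (c i) ^+ 2 + al (c j) ^+ 2) =
          4 * eps * n%:R * T.
  have e1 i : \sum_j 2 * eps * (al (c i) ^+ 2 + al (c j) ^+ 2) =
      2 * eps * (\sum_(j < n) al (c i) ^+ 2 + \sum_j al (c j) ^+ 2).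
    by rewrite -mulr_sumr big_split.
  under eq_bigr do rewrite e1.
  rewrite -mulr_sumr big_split /=.
  have e2 : \sum_(i < n) \sum_(j < n) al (c i) ^+ 2 = n%:R * T.
    by rewrite /T mulr_sumr; apply: eq_bigr => i _; rewrite sumr_const card_ord mulr_natl.
  have e3 : \sum_(i < n) \sum_(j < n) al (c j) ^+ 2 = n%:R * T.
    by rewrite sumr_const card_ord mulr_natl.
  rewrite e2 e3; ring.
have h4 : T <= \sum_i (s i * al (c i)) ^+ 2.
  apply: ler_sum => i _; rewrite exprMn s_sq.
  rewrite -{1}(mul1r (al (c i) ^+ 2)); apply: ler_wpM2r; first exact: sqr_ge0.
  exact: deg_ge1.
have Tge0 : 0 <= T by apply: sumr_ge0 => i _; apply: sqr_ge0.
have nge0 : 0 <= n%:R :> R by apply: ler0n.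
rewrite h3 in h1.
apply: (le_trans (y := 2^-1 * (4 * eps * n%:R * T))).
  by apply: ler_wpM2l => //; rewrite invr_ge0.
have -> : 2^-1 * (4 * eps * n%:R * T) = 2 * n%:R * eps * T by field.
apply: ler_wpM2l => //; apply: mulr_ge0 => //; apply: mulr_ge0 => //.
Qed.


Lemma lam_bound (a : 'I_n) : (a < k)%N -> lam 0 a <= 2 * n%:R * eps.
Proof.
move=> ak.
pose Pa : 'M[R]_(n, a) := \matrix_(i, b) ((i : nat) == (b : nat))%:R.
pose Gm : 'M[R]_(k, n) := \matrix_(m, i) (if c i == m then s i else 0).
pose M := Gm *m U *m Pa.
have rk : (0 < \rank (kermx M))%N.
  by rewrite mxrank_ker subn_gt0; apply: leq_ltn_trans (rank_leq_col M) ak.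
have [r hr] : exists r, row r (kermx M) != 0.
  have [r hr|h] := pickP (fun r => row r (kermx M) != 0); first by exists r.
  have : kermx M = 0.
    apply/row_matrixP => r; rewrite row0; by move/negbFE/eqP: (h r).
  by move=> e; move: rk; rewrite e mxrank0.
pose al := row r (kermx M).
have alM : al *m M = 0 by rewrite /al -row_mul mulmx_ker row0.
have [m hm] : exists m, al 0 m != 0.
  have [m hm|h] := pickP (fun m => al 0 m != 0); first by exists m.
  have : al = 0 by apply/rowP => m0; move: (h m0) => /negbFE/eqP ->; rewrite mxE.
  by move=> e; move: hr; rewrite -/al e eqxx.
pose vr := al *m Gm.
have vE i : vr 0 i = s i * al 0 (c i).
  have GmE m' : Gm m' i = if c i == m' then s i else 0 by rewrite mxE.
  rewrite [vr 0 i]mxE (bigD1 (c i)) //= GmE eqxx big1 ?addr0; first by rewrite mulrC.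
  by move=> m' ne; rewrite GmE eq_sym (negbTE ne) mulr0.
pose w := vr *m U.
have w0 (b : 'I_n) : (b < a)%N -> w 0 b = 0.
  move=> ba; have := congr1 (fun X : 'M[R]_(1, a) => X 0 (Ordinal ba)) alM.
  have PaE i (b' : 'I_a) : Pa i b' = ((i : nat) == b')%:R by rewrite mxE.
  rewrite /M !mulmxA -/vr -/w mxE (bigD1 b) //= PaE /= eqxx mulr1 big1 ?addr0.
    by move=> ->; rewrite mxE.
  move=> j ne; rewrite PaE /=; case: eqP => [e|_]; last by rewrite mulr0.
  by move: ne; rewrite -val_eqE /= e eqxx.
pose N := \sum_b (w 0 b) ^+ 2.
have q1 : lam 0 a * N <= Qs (fun i => vr 0 i).
  rewrite Qr_eq /N mulr_sumr; apply: ler_sum => b _.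
  case: (ltnP b a) => [ba|ab]; first by rewrite -/w w0 // expr0n /= !mulr0.
  apply: ler_wpM2r; first exact: sqr_ge0.
  by case: hU => _ [_ ]; apply.
have q2 : Qs (fun i => vr 0 i) <= 2 * n%:R * eps * N.
  have -> : (fun i => vr 0 i) = (fun i => s i * (fun m => al 0 m) (c i)).
    by apply: funext => i; rewrite vE.
  apply: le_trans (rayleigh _) _.
  rewrite /N -norm_eq; apply: ler_wpM2l.
    by apply: mulr_ge0 => //; apply: mulr_ge0 => //; apply: ler0n.
  by rewrite le_eqVlt; apply/orP; left; apply/eqP/eq_bigr => i _; rewrite vE.
have Npos : 0 < N.
  have [i0 hi0] := c_surj m.
  rewrite /N -norm_eq (bigD1 i0) //=; apply: (lt_le_trans (y := vr 0 i0 ^+ 2)).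
    by rewrite lt0r sqr_ge0 andbT sqrf_eq0 vE hi0 mulf_neq0 // gt_eqF // s_pos.
  by rewrite lerDl; apply: sumr_ge0 => i _; apply: sqr_ge0.
by rewrite -(ler_pM2r Npos); apply: le_trans q1 q2.
Qed.


Lemma sq_step (a b t B : R) : 0 <= t -> 0 <= B -> b ^+ 2 <= t * B ->
  (a + b) ^+ 2 <= (t + 1) * (a ^+ 2 + B).
Proof.
move=> t0 B0 hb.
have [te|tp] := eqVneq t 0.
  rewrite te mul0r in hb; rewrite te.
  have b0 : b = 0 by apply/eqP; rewrite -sqrf_eq0 eq_le hb sqr_ge0.
  rewrite b0 addr0 add0r mul1r lerDl //.
have tpos : 0 < t by rewrite lt0r tp t0.
have h : 0 <= t * (t * a ^+ 2 - 2 * a * b + B).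
  have := sqr_ge0 (t * a - b); nra.
have h2 : 0 <= t * a ^+ 2 - 2 * a * b + B.
  by rewrite -(pmulr_rge0 _ tpos).
nra.
Qed.

Lemma conn_step (C S : {set 'I_n}) (dl : R) : connected_at x C dl ->
  S \subset C -> S != finset.set0 -> C :\: S != finset.set0 ->
  exists p q, [/\ p \in S, q \in C :\: S & eucl (x p - x q) <= dl].
Proof.
move=> hC SC S0 CS0.
case: (pselect (exists p q, [/\ p \in S, q \in C :\: S & eucl (x p - x q) <= dl])) => // hn.
exfalso; apply: (hC S (C :\: S)) => //.
- apply/setP => y; rewrite !inE; case yS: (y \in S) => //=.
  by move/fintype.subsetP: SC => /(_ y yS) ->.
- by apply/setP => y; rewrite !inE; case: (y \in S); rewrite ?andbF.
pose mu := \big[Num.min/(dl + 1)]_(e : 'I_n * 'I_n | (e.1 \in S) && (e.2 \in C :\: S))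
              eucl (x e.1 - x e.2).
have dmu : dl < mu.
  apply: lt_bigmin; first by rewrite ltrDl.
  move=> [p q] /= /andP [pS qCS]; rewrite ltNge; apply/negP => h.
  by apply: hn; exists p, q.
apply: (lt_le_trans (y := mu%:E)); first by rewrite lte_fin.
apply/ereal_infP => y [p [q [pS [qCS ->]]]].
rewrite lee_fin.
exact: (bigmin_le_cond _ (j := (p, q)) (P := fun e : 'I_n * 'I_n => (e.1 \in S) && (e.2 \in C :\: S))
     (fun e => eucl (x e.1 - x e.2)) (introT andP (conj pS qCS))).
Qed.


Lemma path_bound (C : {set 'I_n}) (dl : R) (f : 'I_n -> R) :
  connected_at x C dl -> forall i, i \in C ->
  exists E : {set 'I_n * 'I_n},
    (forall e, e \in E -> eucl (x e.1 - x e.2) <= dl) /\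
    forall p, p \in C ->
      (f p - f i) ^+ 2 <= (#|C|.-1)%:R * \sum_(e in E) (f e.1 - f e.2) ^+ 2.
Proof.
move=> hC i iC.
pose g (e : 'I_n * 'I_n) := (f e.1 - f e.2) ^+ 2.
have gge0 e : 0 <= g e by apply: sqr_ge0.
suff H : forall m (S : {set 'I_n}) (E : {set 'I_n * 'I_n}),
    #|C :\: S| = m -> i \in S -> S \subset C ->
    (forall e, e \in E -> [/\ e.1 \in S, e.2 \in S & eucl (x e.1 - x e.2) <= dl]) ->
    (forall p, p \in S -> (f p - f i) ^+ 2 <= (#|S|.-1)%:R * \sum_(e in E) g e) ->
    exists E : {set 'I_n * 'I_n},
    (forall e, e \in E -> eucl (x e.1 - x e.2) <= dl) /\
    forall p, p \in C -> (f p - f i) ^+ 2 <= (#|C|.-1)%:R * \sum_(e in E) g e.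
  apply: (H _ [set i] finset.set0 erefl).
  - by rewrite inE.
  - by apply/fintype.subsetP => y; rewrite inE => /eqP ->.
  - by move=> e; rewrite inE.
  by move=> p; rewrite inE => /eqP ->; rewrite subrr expr2 mulr0 big_set0 mulr0.
elim=> [|m IH] S E hm iS SC hE hp.
  have CS0 : C :\: S = finset.set0 by apply/eqP; rewrite -cards_eq0 hm.
  have SeqC : S = C.
    apply/eqP; rewrite finset.eqEsubset SC /=; apply/fintype.subsetP => y yC.
    apply/negPn/negP => yS.
    have : y \in C :\: S by rewrite inE yS yC.
    by rewrite CS0 inE.
  exists E; split; first by move=> e /hE [].
  by rewrite -SeqC.
have S0 : S != finset.set0 by apply/set0Pn; exists i.
have CS0 : C :\: S != finset.set0 by rewrite -card_gt0 hm.
have [p [q [pS qCS hpq]]] := @conn_step C S dl hC SC S0 CS0.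
move: (qCS); rewrite inE => /andP [qS qC].
have pqE : (p, q) \notin E by apply/negP => /hE [_ /= qS' _]; move/negP: qS.
apply: (IH (q |: S) ((p, q) |: E)).
- move: hm; rewrite (cardsD1 q (C :\: S)) qCS add1n => -[<-].
  apply: eq_card => y; rewrite !inE.
  by case: (y == q); case: (y \in S); case: (y \in C).
- by rewrite inE iS orbT.
- by rewrite finset.subUset finset.sub1set qC SC.
- move=> e; rewrite !inE => /orP [/eqP -> | /hE [h1 h2 h3]] /=.
    by rewrite eqxx pS orbT.
  by rewrite h1 h2 !orbT.
rewrite cardsU1 qS add1n /= big_setU1 //=.
have Sgt0 : (0 < #|S|)%N by rewrite card_gt0.
have eS : #|S|%:R = (#|S|.-1)%:R + 1 :> R by rewrite natr1 prednK.
have t0 : 0 <= (#|S|.-1)%:R :> R by apply: ler0n.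
have B0 : 0 <= \sum_(e in E) g e by apply: sumr_ge0.
move=> y; rewrite !inE => /orP [/eqP -> | yS].
  have -> : f q - f i = (f q - f p) + (f p - f i) by ring.
  have -> : g (p, q) = (f q - f p) ^+ 2 by rewrite /g /= -sqrrN opprB.
  by rewrite eS; apply: sq_step => //; apply: hp.
apply: le_trans (hp y yS) _; rewrite eS.
have := gge0 (p, q); nra.
Qed.


Lemma Kext_ge (C : {set 'I_n}) i j : i \in C -> j \in ~: C ->
  A i j <= Ksig_ext K sigma (setdist x C (~: C)).
Proof.
move=> iC jC.
have e_le : (setdist x C (~: C) <= (eucl (x i - x j))%:E)%E.
  by apply: ereal_inf_lbound; exists i, j.
have e_ge : (0 <= setdist x C (~: C))%E.
  by apply/ereal_infP => y [p [q [_ [_ ->]]]]; rewrite lee_fin eucl_ge0.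
move: e_le e_ge; case: (setdist x C (~: C)) => [r| |] //=.
rewrite !lee_fin => hr r0.
by rewrite AE; apply: Ksig_noninc.
Qed.

Lemma edge_sum (a : 'I_n) :
  \sum_i \sum_j A i j * (U i a / s i - U j a / s j) ^+ 2 = 2 * lam 0 a.
Proof.
have := Qs_id (fun p => U p a / s p).
have -> : (fun i => s i * (U i a / s i)) = (fun i => U i a).
  apply: funext => i; have := s_pos i => hs; field; by rewrite gt_eqF.
rewrite col_lam => ->; by field.
Qed.

Lemma term_bound (C : {set 'I_n}) (dl : R) : connected_at x C dl -> 0 <= dl ->
  forall i j, i \in C -> j \in C -> forall a : 'I_n, (a < k)%N ->
  (U i a / s i - U j a / s j) ^+ 2 <= (n.-1)%:R * (4 * n%:R * eps / Ksig K sigma dl).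
Proof.
move=> hC dl0 i j iC jC a ak.
pose f p := U p a / s p.
have [E [hE hp]] := @path_bound C dl f hC i iC.
have Kd : 0 < Ksig K sigma dl by apply: Ksig_pos.
pose g (e : 'I_n * 'I_n) := (f e.1 - f e.2) ^+ 2.
have gge0 e : 0 <= g e by apply: sqr_ge0.
have h1 : Ksig K sigma dl * \sum_(e in E) g e <= \sum_(e in E) A e.1 e.2 * g e.
  rewrite mulr_sumr; apply: ler_sum => e eE; apply: ler_wpM2r => //.
  by rewrite AE; apply: Ksig_noninc => //; [apply: eucl_ge0 | apply: hE].
have h2 : \sum_(e in E) A e.1 e.2 * g e <= 4 * n%:R * eps.
  apply: (le_trans (y := \sum_e A e.1 e.2 * g e)).
    rewrite [X in _ <= X](bigID (fun e => e \in E)) /= lerDl.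
    by apply: sumr_ge0 => e _; apply: mulr_ge0 => //; apply: ltW; apply: A_pos.
  rewrite -(pair_bigA _ (fun i j => A i j * g (i, j))) edge_sum.
  have := @lam_bound a ak; lra.
have h3 : \sum_(e in E) g e <= 4 * n%:R * eps / Ksig K sigma dl.
  by rewrite ler_pdivlMr // mulrC; apply: le_trans h1 h2.
have B0 : 0 <= \sum_(e in E) g e by apply: sumr_ge0.
have hC1 : (#|C|.-1 <= n.-1)%N.
  by rewrite -subn1 -(subn1 n); apply: leq_sub2r; apply: leq_trans (max_card _) _; rewrite card_ord.
rewrite -sqrrN opprB.
apply: le_trans (hp j jC) _.
apply: (le_trans (y := (n.-1)%:R * \sum_(e in E) g e)).
  by apply: ler_wpM2r => //; rewrite ler_nat.
by apply: ler_wpM2l => //; apply: ler0n.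
Qed.

End Aux.

Lemma nat_cube (n : nat) : (n.-1 * (4 * n) <= n ^ 3)%N.
Proof.
case: n => [|[|p]] //=; rewrite !expnS expn0 muln1.
have h : (p.+2 * (4 * p.+1) <= p.+2 * (p.+2 * p.+2))%N.
  rewrite leq_mul2l /=; nia.
nia.
Qed.

Theorem lemma2 (R : realType) (K : R -> R)
  (K_noninc : forall s t : R, 0 <= s -> s <= t -> K t <= K s)
  (K_pos : forall t : R, 0 <= t -> 0 < K t)
  (K0 : K 0 = 1)
  (sigma : R) (sigma_pos : 0 < sigma)
  (n d k : nat) (x : 'I_n -> 'rV[R]_d) (x_inj : injective x)
  (c : 'I_n -> 'I_k) (c_surj : forall l : 'I_k, exists i, c i = l)
  (delta : 'I_k -> R) (delta_ge0 : forall l, 0 <= delta l)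
  (conn : forall l : 'I_k, connected_at x [set i | c i == l] (delta l))
  (U : 'M[R]_n) (lam : 'rV[R]_n)
  (hU : eigbasis (normLap (affinity K sigma x)) U lam) :
  let D := degmx (affinity K sigma x) in
  forall (i j : 'I_n) (l : 'I_k), c i = l -> c j = l ->
    Num.sqrt (\sum_(a < n | (a < k)%N)
       ((Num.sqrt (D i i))^-1 * U i a - (Num.sqrt (D j j))^-1 * U j a) ^+ 2)
    <= \big[Num.max/0]_(m < k)
         (n%:R * Num.sqrt n%:R * Num.sqrt k%:R *
          Num.sqrt (Ksig_ext K sigma (setdist x [set i | c i == m] (~: [set i | c i == m]))
                    / Ksig K sigma (delta l))).
Proof.
move=> D i j l ci cj.
have DE p : D p p = \sum_(q < n) affinity K sigma x p q by rewrite /D /degmx mxE eqxx.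
pose Kext m := Ksig_ext K sigma (setdist x [set p | c p == m] (~: [set p | c p == m])).
pose eps := \big[Num.max/0]_(m < k) Kext m.
have eps_ge0 : 0 <= eps by exact: bigmax_ge_id.
have A_eps p q : c p != c q -> affinity K sigma x p q <= eps.
  move=> ne.
  apply: le_trans (@Kext_ge R K K_noninc sigma sigma_pos n d x [set p0 | c p0 == c p] p q _ _) _.
  - by rewrite inE.
  - by rewrite !inE eq_sym.
  - exact: (le_bigmax _ (fun m => Kext m) (c p)).
pose Kd := Ksig K sigma (delta l).
have Kd0 : 0 < Kd by apply: (@Ksig_pos R K K_pos sigma sigma_pos).
pose Bd := (n.-1)%:R * (4 * n%:R * eps / Kd).
have Bd0 : 0 <= Bd.
  apply: mulr_ge0; first exact: ler0n.
  apply: divr_ge0; last exact: ltW.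
  by apply: mulr_ge0 => //; apply: mulr_ge0 => //; apply: ler0n.
have hterm (a : 'I_n) : (a < k)%N ->
    ((Num.sqrt (D i i))^-1 * U i a - (Num.sqrt (D j j))^-1 * U j a) ^+ 2 <= Bd.
  move=> ak; rewrite !DE.
  have := @term_bound R K K_noninc K_pos K0 sigma sigma_pos n d x U lam hU k c eps
     c_surj eps_ge0 A_eps [set p | c p == l] (delta l) (conn l) (delta_ge0 l) i j _ _ a ak.
  rewrite !inE ci cj eqxx => /(_ isT isT).
  by rewrite (mulrC _^-1 (U i a)) (mulrC _^-1 (U j a)).
have hcard : (#|[pred a : 'I_n | (a < k)%N]| <= k)%N.
  rewrite -[k in (_ <= k)%N]card_ord.
  apply: (@leq_card_in _ _ (fun a : 'I_n => insubd l (a : nat))) => a b.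
  rewrite !inE /= => ak bk /(congr1 val); rewrite !val_insubd ak bk => e.
  exact: val_inj.
have hsum : \sum_(a < n | (a < k)%N)
       ((Num.sqrt (D i i))^-1 * U i a - (Num.sqrt (D j j))^-1 * U j a) ^+ 2 <= k%:R * Bd.
  apply: (le_trans (y := \sum_(a < n | (a < k)%N) Bd)).
    by apply: ler_sum => a ak; apply: hterm.
  have -> : \sum_(a < n | (a < k)%N) Bd = Bd *+ #|[pred a : 'I_n | (a < k)%N]|.
    by rewrite -sumr_const.
  rewrite -mulr_natl; apply: ler_wpM2r => //; by rewrite ler_nat.
pose te := eps / Kd.
have te0 : 0 <= te by apply: divr_ge0 => //; apply: ltW.
pose Phi t := n%:R * Num.sqrt n%:R * Num.sqrt k%:R * Num.sqrt (t / Kd).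
have Phi0 : 0 <= Phi eps.
  by rewrite /Phi; do 3! apply: mulr_ge0 => //; rewrite ?ler0n ?sqrtr_ge0.
have h1 : Num.sqrt (\sum_(a < n | (a < k)%N)
       ((Num.sqrt (D i i))^-1 * U i a - (Num.sqrt (D j j))^-1 * U j a) ^+ 2) <= Phi eps.
  rewrite -(ger0_norm Phi0) -sqrtr_sqr; apply: ler_wsqrtr.
  apply: le_trans hsum _.
  have -> : Phi eps ^+ 2 = n%:R ^+ 3 * k%:R * te.
    rewrite /Phi !exprMn !sqr_sqrtr ?ler0n // -/te; ring.
  have hn : (n.-1)%:R * (4 * n%:R) <= n%:R ^+ 3 :> R.
    by have := nat_cube n; rewrite -(ler_nat R) natrM natrM natrX.
  have -> : k%:R * Bd = k%:R * ((n.-1)%:R * (4 * n%:R)) * te by rewrite /Bd /te; ring.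
  rewrite [_ * k%:R]mulrC; apply: ler_wpM2r => //; apply: ler_wpM2l => //; exact: ler0n.
apply: le_trans h1 _.
have Phimono a b : a <= b -> Phi a <= Phi b.
  move=> ab; rewrite /Phi; apply: ler_wpM2l.
    by do 2! apply: mulr_ge0 => //; rewrite ?ler0n ?sqrtr_ge0.
  apply: ler_wsqrtr; apply: ler_wpM2r => //; rewrite invr_ge0; exact: ltW.
have PhiZ : Phi 0 = 0 by rewrite /Phi mul0r sqrtr0 mulr0.
apply: (big_rec2 (fun y1 y2 => Phi y1 <= y2)); first by rewrite PhiZ.
move=> m y1 y2 _ IH; rewrite maxEle; case: ifP => h.
  by rewrite le_max IH orbT.
by rewrite le_max lexx.
Qed.
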